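(* For all integers $d\ge 2$ and $n\ge 2$, every Latin hypercuboid in $\mathrm{LHC}(d,n,n-1)$ is completable.
   Context: $[n]=\{1,\dots,n\}$. For integers $d\ge2$ and $1\le k\le n$, $\mathrm{LHC}(d,n,k)$ denotes the set of $d$-dimensional arrays of dimensions $n\times\cdots\times n\times k$ (the last coordinate ranging over $[k]$, the others over $[n]$) with entries from $[n]$ such that each symbol occurs at most once in each axis-parallel line (a set of cells obtained by fixing all coordinates but one). A hypercuboid $H\in\mathrm{LHC}(d,n,k)$ is completable if it is contained in (i.e. equals the restriction to the first $k$ values of the last coordinate of) some array in $\mathrm{LHC}(d,n,n)$ (a Latin hypercube). *)

(* Defs.v *)
From mathcomp Require Import all_boot.
Set Implicit Arguments. Unset Strict Implicit. Unset Printing Implicit Defensive.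

(* A d-dimensional array of dimensions n x ... x n x k (d-1 coordinates in [n],
   last coordinate in [k]) with entries in [n].  [n] is modelled by 'I_n
   (values 0..n-1), cells by pairs (x, z) with x : {ffun 'I_(d.-1) -> 'I_n}
   the first d-1 coordinates and z : 'I_k the last coordinate. *)
Definition cell (d n k : nat) : finType := ({ffun 'I_d.-1 -> 'I_n} * 'I_k)%type.

Definition array (d n k : nat) : finType := {ffun cell d n k -> 'I_n}.

Definition same_line (d n k : nat) (c c' : cell d n k) : Prop :=
  (c.2 = c'.2 /\ exists i : 'I_d.-1, forall j : 'I_d.-1, j != i -> c.1 j = c'.1 j)
  \/ c.1 = c'.1.

Definition is_latin (d n k : nat) (H : array d n k) : Prop :=
  forall c c' : cell d n k, same_line c c' -> H c = H c' -> c = c'.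

Definition LHC (d n k : nat) (H : array d n k) : Prop := is_latin H.

Definition completable (d n k : nat) (H : array d n k) : Prop :=
  exists L : array d n n, LHC L /\
    forall (x : {ffun 'I_d.-1 -> 'I_n}) (z : 'I_k) (hz : (z < n)%N),
      L (x, Ordinal hz) = H (x, z).

(* Main.v *)
Require Import Defs.
From mathcomp Require Import all_boot.

Section Aux.
Variables (d m : nat) (H : array d m.+2 m.+1).
Hypothesis HL : LHC H.

Definition upd (x : {ffun 'I_d.-1 -> 'I_m.+2}) (i : 'I_d.-1) (t : 'I_m.+2) :
  {ffun 'I_d.-1 -> 'I_m.+2} := [ffun j => if j == i then t else x j].

Definition miss (x : {ffun 'I_d.-1 -> 'I_m.+2}) : 'I_m.+2 :=
  odflt ord0 [pick s | [forall z, H (x, z) != s]].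

Lemma missP x z : H (x, z) != miss x.
Proof.
rewrite /miss; case: pickP => [s /forallP //|Hn].
exfalso.
have: #|[set: 'I_m.+2]| <= #|[set H (x, z0) | z0 in 'I_m.+1]|.
  apply: subset_leq_card; apply/subsetP => s _.
  move/negbT: (Hn s); rewrite negb_forall => /existsP [z0].
  rewrite negbK => /eqP <-; exact: imset_f.
rewrite cardsT card_ord => /leq_trans /(_ (leq_imset_card _ _)).
by rewrite card_ord ltnn.
Qed.

Lemma miss_col x z : forall z', H (x, z) = H (x, z') -> z = z'.
Proof.
move=> z' E; have := HL (x, z) (x, z') (or_intror erefl) E.
by case.
Qed.

Lemma row_inj x i z : injective (fun t => H (upd x i t, z)).
Proof.
move=> t t' E.
have : (upd x i t, z) = (upd x i t', z).
  apply: HL E; left; split=> //; exists i => j hj; by rewrite !ffunE (negbTE hj).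
case=> e; move: (congr1 (fun f : {ffun _ -> _} => f i) e); by rewrite !ffunE eqxx.
Qed.

Definition fz x i s (z : 'I_m.+1) : 'I_m.+2 :=
  odflt ord0 [pick t | H (upd x i t, z) == s].

Lemma fzP x i s z : H (upd x i (fz x i s z), z) = s.
Proof.
rewrite /fz; case: pickP => [t /eqP //|Hn]; exfalso.
have := inj_card_onto (row_inj x i z) (leqnn _) s.
case/codomP => t E; by move: (Hn t); rewrite -E eqxx.
Qed.

Lemma fz_inj x i s : injective (fz x i s).
Proof.
move=> z z' E; apply: (@miss_col (upd x i (fz x i s z))).
by rewrite {2}E !fzP.
Qed.

Lemma miss_uniq (x x' : {ffun 'I_d.-1 -> 'I_m.+2}) i :
  (forall j, j != i -> x j = x' j) -> miss x = miss x' -> x = x'.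
Proof.
move=> Hj Em.
set s := miss x.
pose A := [set t | [forall z, H (upd x i t, z) != s]].
have ux : upd x i (x i) = x.
  by apply/ffunP => j; rewrite ffunE; case: eqP => // ->.
have ux' : upd x i (x' i) = x'.
  apply/ffunP => j; rewrite ffunE; case: eqP => [->//|/eqP h]; exact: Hj.
have Ax : x i \in A by rewrite inE; apply/forallP => z; rewrite ux; exact: missP.
have Ax' : x' i \in A.
  by rewrite inE; apply/forallP => z; rewrite ux' /s Em; exact: missP.
have sub : A \subset ~: [set fz x i s z | z in 'I_m.+1].
  apply/subsetP => t; rewrite inE => /forallP Ht; rewrite inE.
  apply/imsetP => [[z _ Et]]; move: (Ht z); by rewrite Et fzP eqxx.
have cA : #|A| <= 1.
  apply: (leq_trans (subset_leq_card sub)).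
  by rewrite cardsCs setCK card_imset ?card_ord ?subSnn //; exact: fz_inj.
have Ei : x i = x' i by apply: (card_le1_eqP cA).
apply/ffunP => j; case: (eqVneq j i) => [->//|h]; exact: Hj.
Qed.

Definition Lfull : array d m.+2 m.+2 :=
  [ffun c : cell d m.+2 m.+2 =>
     if insub (val c.2) is Some z then H (c.1, z) else miss c.1].

Lemma Lfull_latin : LHC Lfull.
Proof.
move=> [x z] [x' z'] /= SL; rewrite !ffunE /=.
case: insubP => [zz hz Ez|hz]; case: insubP => [zz' hz' Ez'|hz'].
- move=> E; have : (x, zz) = (x', zz').
    apply: HL E.
    case: SL => [[/= e [i Hi]]|/= e]; [left; split; last by exists i|by right].
    by apply: val_inj; rewrite /= Ez Ez' e.
  case=> -> e; congr pair; apply: val_inj; by rewrite /= -Ez -Ez' e.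
- move=> E; exfalso; case: SL => [[/= e _]|/= e].
    by move: hz hz'; rewrite e; case: (_ < _).
  by move: (missP x zz); rewrite E e eqxx.
- move=> E; exfalso; case: SL => [[/= e _]|/= e].
    by move: hz hz'; rewrite e; case: (_ < _).
  by move: (missP x' zz'); rewrite -E e eqxx.
- have ez : z = z'.
    apply: val_inj; move: hz hz' (ltn_ord z) (ltn_ord z').
    rewrite /= -!leqNgt => a b c e.
    apply/eqP; rewrite eqn_leq; apply/andP; split.
      by apply: leq_trans b; rewrite -ltnS.
    by apply: leq_trans a; rewrite -ltnS.
  move=> E; subst z'; case: SL => [[/= _ [i Hi]]|/= ->//].
  by rewrite (@miss_uniq x x' i Hi E).
Qed.

End Aux.

Theorem mainTheorem4 (d n : nat) (hd : (2 <= d)%N) (hn : (2 <= n)%N)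
  (H : array d n n.-1) : LHC H -> completable H.
Proof.
case: n hn H => [|[|m]] // _ H HL.
exists (@Lfull d m H); split; first exact: Lfull_latin.
move=> x z hz; rewrite ffunE /=.
case: insubP => [zz _ E|]; last by rewrite /= ltn_ord.
by congr (H (x, _)); apply: val_inj.
Qed.
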